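(* Let $\delta_B,\delta_R\ge 1$ be integers, and for $\lambda\in\mathbb C$ let $\mu^\pm(\lambda)$ be the eigenvalues of the matrix $T_0(\lambda)$ defined in the context, i.e. \[\mu^\pm(\lambda)=\tfrac12\operatorname{tr}T_0(\lambda)\pm\sqrt{\tfrac14(\operatorname{tr}T_0(\lambda))^2-\tfrac{1}{\delta_B\delta_R}}.\] Then, as $\lambda\to-\infty$ along the real axis, \[\lim_{\lambda\to-\infty}e^{-2|\operatorname{Im}\sqrt\lambda|}\mu^+(\lambda)=\frac{\delta_R+1}{2\delta_R}\cdot\frac{\delta_B+1}{2\delta_B},\qquad \lim_{\lambda\to-\infty}e^{2|\operatorname{Im}\sqrt\lambda|}\mu^-(\lambda)=\frac{2}{\delta_R+1}\cdot\frac{2}{\delta_B+1}.\]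
   Context: Write $\omega=\sqrt\lambda$ and define the entire functions of $\lambda$: $c(\lambda)=\cos\omega$, $c'(\lambda)=-\omega\sin\omega$, $s(\lambda)=\sin\omega/\omega$, $s'(\lambda)=\cos\omega$. Let $M_0(\lambda)=\begin{pmatrix}c&s\\ c'&s'\end{pmatrix}$, $J_B=\begin{pmatrix}1&0\\0&1/\delta_B\end{pmatrix}$, $J_R=\begin{pmatrix}1&0\\0&1/\delta_R\end{pmatrix}$, and $T_0(\lambda)=J_RM_0(\lambda)J_BM_0(\lambda)$ (the transition matrix propagating initial data $(y,y')$ over two consecutive edges of the biregular tree with degrees $\delta_B+1$, $\delta_R+1$). Then $\det T_0(\lambda)=1/(\delta_B\delta_R)$ and $\operatorname{tr}T_0(\lambda)=\cos^2\omega\,(1+\frac{1}{\delta_B\delta_R})-\sin^2\omega\,(\frac1{\delta_R}+\frac1{\delta_B})$. For real $\lambda<0$ this trace is real and, for $|\lambda|$ large, larger than $2/\sqrt{\delta_B\delta_R}$, so $\mu^\pm(\lambda)$ are real with the nonnegative square root taken. *)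

(* Defs.v *)
From Stdlib Require Import Reals.
From Coquelicot Require Import Coquelicot.
Open Scope R_scope.

Record mat2 := Mat2 { m11 : R; m12 : R; m21 : R; m22 : R }.

Definition mmul (A B : mat2) : mat2 :=
  Mat2 (m11 A * m11 B + m12 A * m21 B) (m11 A * m12 B + m12 A * m22 B)
       (m21 A * m11 B + m22 A * m21 B) (m21 A * m12 B + m22 A * m22 B).

Definition mtr (A : mat2) : R := m11 A + m22 A.
Definition mdet (A : mat2) : R := m11 A * m22 A - m12 A * m21 A.

(* For real lambda < 0 we have omega = sqrt(lambda) = i t with t = sqrt(-lambda) > 0,
   so that (as entire functions of lambda, evaluated at lambda):
     c  = cos omega          = cosh t
     c' = - omega sin omega  = t sinh t
     s  = sin omega / omega  = sinh t / t
     s' = cos omega          = cosh t .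
   These definitions are only meaningful (and only used) for lambda < 0. *)
Definition tneg (lam : R) : R := sqrt (- lam).

Definition M0 (lam : R) : mat2 :=
  let t := tneg lam in
  Mat2 (cosh t) (sinh t / t) (t * sinh t) (cosh t).

Definition Jd (d : nat) : mat2 := Mat2 1 0 0 (/ INR d).

Definition T0 (dB dR : nat) (lam : R) : mat2 :=
  mmul (Jd dR) (mmul (M0 lam) (mmul (Jd dB) (M0 lam))).

Definition mu_plus (dB dR : nat) (lam : R) : R :=
  mtr (T0 dB dR lam) / 2
  + sqrt ((mtr (T0 dB dR lam)) ^ 2 / 4 - / (INR dB * INR dR)).

Definition mu_minus (dB dR : nat) (lam : R) : R :=
  mtr (T0 dB dR lam) / 2
  - sqrt ((mtr (T0 dB dR lam)) ^ 2 / 4 - / (INR dB * INR dR)).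

(* |Im sqrt(lambda)| for real lambda < 0 *)
Definition abs_im_sqrt (lam : R) : R := sqrt (- lam).

(* Main.v *)
Require Import Defs.
From Stdlib Require Import Reals Lra Lia.
From Coquelicot Require Import Coquelicot.
Open Scope R_scope.

Lemma u_lim : is_lim (fun lam => exp (-2 * sqrt (- lam))) m_infty 0.
Proof.
  apply (is_lim_comp exp (fun lam => -2 * sqrt (- lam)) m_infty 0 m_infty).
  - exact is_lim_exp_m.
  - replace m_infty with (Rbar_mult (-2) p_infty) at 2.
    2:{ simpl. case (Rle_dec 0 (-2)); intros; try lra. 
        case (Rle_lt_or_eq_dec 0 (-2) r); intros; lra. reflexivity. }
    apply is_lim_scal_l. apply is_lim_sqrt_p.
    replace p_infty with (Rbar_opp m_infty) by reflexivity.
    apply is_lim_opp, is_lim_id.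
  - exists 0. intros; discriminate.
Qed.

Definition Xf (a b u : R) := ((1+u)^2*(1+a*b) + (1-u)^2*(a+b))/4.
Definition Ff (a b u : R) := Xf a b u / 2 + sqrt (Xf a b u ^2 / 4 - a*b*u^2).

Lemma Ff_cont a b : 0 < a -> 0 < b -> continuity_pt (Ff a b) 0.
Proof.
  intros Ha Hb. unfold Ff.
  assert (HX : forall u, continuity_pt (Xf a b) u).
  { intro u. unfold Xf. reg. }
  apply continuity_pt_plus.
  - apply continuity_pt_mult; [apply HX | apply continuity_pt_const; intros ? ?; reflexivity].
  - apply (continuity_pt_comp (fun u => Xf a b u ^ 2 / 4 - a*b*u^2) sqrt).
    + reg; apply HX.
    + apply continuity_pt_sqrt. unfold Xf. nra.
Qed.

Lemma Ff0 a b : 0 < a -> 0 < b -> Ff a b 0 = (1+a)*(1+b)/4.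
Proof.
  intros. unfold Ff, Xf.
  replace ((((1 + 0) ^ 2 * (1 + a * b) + (1 - 0) ^ 2 * (a + b)) / 4) ^ 2 / 4 - a * b * 0 ^ 2)
    with (((1+a)*(1+b)/8)²) by (unfold Rsqr; field).
  rewrite sqrt_Rsqr by nra. field.
Qed.

Lemma F_lim a b : 0 < a -> 0 < b ->
  is_lim (fun lam => Ff a b (exp (-2 * sqrt (- lam)))) m_infty ((1+a)*(1+b)/4).
Proof.
  intros Ha Hb. rewrite <- Ff0 by auto.
  unfold is_lim. eapply filterlim_comp.
  - exact u_lim.
  - apply continuity_pt_filterlim. now apply Ff_cont.
Qed.

Lemma sqrt_scale u Y : 0 < u -> u * sqrt Y = sqrt (u^2 * Y).
Proof.
  intros Hu. destruct (Rle_or_lt 0 Y).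
  - rewrite sqrt_mult_alt by nra. replace (u^2) with (u²) by (unfold Rsqr; field).
    rewrite sqrt_Rsqr; lra.
  - assert (0 < u^2) by nra. rewrite !sqrt_neg_0; try nra.
Qed.

Lemma trace_eq dB dR lam : lam < 0 ->
  mtr (T0 dB dR lam) = cosh (tneg lam) ^ 2 * (1 + /INR dB * /INR dR)
     + sinh (tneg lam) ^ 2 * (/INR dB + /INR dR).
Proof.
  intros Hl. assert (Ht : 0 < tneg lam) by (unfold tneg; apply sqrt_lt_R0; lra).
  unfold mtr, T0, mmul, M0, Jd; simpl.
  set (a := /INR dB). set (b := /INR dR). set (t := tneg lam) in *. field. lra.
Qed.

Lemma eq1 dB dR lam : lam < 0 ->
  exp (- 2 * abs_im_sqrt lam) * mu_plus dB dR lam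
  = Ff (/INR dB) (/INR dR) (exp (-2 * sqrt (- lam))).
Proof.
  intros Hl. unfold mu_plus. rewrite trace_eq by auto.
  unfold abs_im_sqrt, Ff, Xf. fold (tneg lam).
  set (t := tneg lam). set (a := /INR dB). set (b := /INR dR).
  assert (HE : 0 < exp t) by apply exp_pos.
  assert (Hu : exp (-2 * t) = / exp t ^ 2).
  { replace (-2*t) with (-(t+t)) by ring. rewrite exp_Ropp, exp_plus. field. lra. }
  rewrite Hu. unfold cosh, sinh. rewrite exp_Ropp.
  set (E := exp t) in *.
  rewrite Rinv_mult. fold a b. clearbody a b E.
  rewrite Rmult_plus_distr_l. rewrite sqrt_scale by (apply Rinv_0_lt_compat; nra).
  f_equal.
  - field. lra.
  - f_equal. field. lra.
Qed.

Lemma eq2 dB dR lam : (1 <= dB)%nat -> (1 <= dR)%nat -> lam < 0 ->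
  exp (2 * abs_im_sqrt lam) * mu_minus dB dR lam
  = (/INR dB * /INR dR) / (exp (- 2 * abs_im_sqrt lam) * mu_plus dB dR lam).
Proof.
  intros HB HR Hl.
  assert (hb : 0 < /INR dB) by (apply Rinv_0_lt_compat, lt_0_INR; lia).
  assert (hr : 0 < /INR dR) by (apply Rinv_0_lt_compat, lt_0_INR; lia).
  unfold mu_minus, mu_plus. rewrite Rinv_mult.
  assert (Htr := trace_eq dB dR lam Hl).
  set (a := /INR dB) in *. set (b := /INR dR) in *.
  set (tr := mtr (T0 dB dR lam)) in *.
  assert (Hc : 1 <= cosh (tneg lam)).
  { unfold cosh. rewrite exp_Ropp. assert (HE := exp_pos (tneg lam)).
    set (E := exp (tneg lam)) in *.
    apply Rmult_le_reg_r with (2*E). lra.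
    replace ((E + / E) / 2 * (2 * E)) with (E*E+1) by (field; lra). assert (0 <= (E-1)*(E-1)) by apply Rle_0_sqr. nra. }
  assert (Htr1 : 1 + a*b <= tr).
  { rewrite Htr. assert (0 <= sinh (tneg lam) ^ 2) by nra.
    assert (1 <= cosh (tneg lam) ^ 2) by nra.
    assert (0 < a*b) by nra.
    assert (0 <= sinh (tneg lam) ^ 2 * (a+b)) by nra.
    assert (1 + a*b <= cosh (tneg lam) ^ 2 * (1 + a * b)) by nra. lra. }
  assert (HY : 0 <= tr ^ 2 / 4 - a * b).
  { assert (0 < a*b) by nra.
    assert ((1+a*b)*(1+a*b) <= tr*tr) by (apply Rmult_le_compat; lra).
    assert (0 <= (1-a*b)*(1-a*b)) by apply Rle_0_sqr. nra. }
  assert (Hs := sqrt_sqrt _ HY). assert (Hs0 := sqrt_pos (tr ^ 2 / 4 - a * b)).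
  set (s := sqrt (tr ^ 2 / 4 - a * b)) in *.
  assert (He : exp (2 * abs_im_sqrt lam) * exp (- 2 * abs_im_sqrt lam) = 1).
  { rewrite <- exp_plus. replace (2 * abs_im_sqrt lam + -2 * abs_im_sqrt lam) with 0 by ring.
    apply exp_0. }
  assert (HE1 := exp_pos (2 * abs_im_sqrt lam)).
  assert (HE2 := exp_pos (-2 * abs_im_sqrt lam)).
  set (e1 := exp (2 * abs_im_sqrt lam)) in *. set (e2 := exp (-2 * abs_im_sqrt lam)) in *.
  clearbody a b tr s e1 e2.
  assert (Hm : (tr/2 - s) * (tr/2 + s) = a*b) by nra.
  assert (0 < tr/2 + s) by nra.
  apply Rmult_eq_reg_r with (e2 * (tr/2+s)). 2: nra.
  field_simplify. 2: lra.
  nra.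
Qed.

Theorem lemma4p1 (dB dR : nat) (hB : (1 <= dB)%nat) (hR : (1 <= dR)%nat) :
  is_lim (fun lam => exp (- 2 * abs_im_sqrt lam) * mu_plus dB dR lam) m_infty
    ((INR dR + 1) / (2 * INR dR) * ((INR dB + 1) / (2 * INR dB)))
  /\
  is_lim (fun lam => exp (2 * abs_im_sqrt lam) * mu_minus dB dR lam) m_infty
    (2 / (INR dR + 1) * (2 / (INR dB + 1))).
Proof.
  assert (iB : 0 < INR dB) by (apply lt_0_INR; lia).
  assert (iR : 0 < INR dR) by (apply lt_0_INR; lia).
  assert (hb : 0 < /INR dB) by (apply Rinv_0_lt_compat; lra).
  assert (hr : 0 < /INR dR) by (apply Rinv_0_lt_compat; lra).
  assert (L1 : is_lim (fun lam => exp (- 2 * abs_im_sqrt lam) * mu_plus dB dR lam) m_infty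
                 ((1 + /INR dB) * (1 + /INR dR) / 4)).
  { eapply is_lim_ext_loc. 2: exact (F_lim _ _ hb hr).
    exists 0. intros. symmetry. apply eq1. auto. }
  split.
  - replace ((INR dR + 1) / (2 * INR dR) * ((INR dB + 1) / (2 * INR dB)))
      with ((1 + /INR dB) * (1 + /INR dR) / 4) by (field; lra). exact L1.
  - eapply is_lim_ext_loc.
    { exists 0. intros. symmetry. apply eq2; auto. }
    replace (Finite (2 / (INR dR + 1) * (2 / (INR dB + 1))))
      with (Rbar_mult (/INR dB * /INR dR) (Rbar_inv ((1 + /INR dB) * (1 + /INR dR) / 4))).
    2:{ simpl. f_equal. field. lra. }
    apply is_lim_scal_l. apply is_lim_inv. exact L1.
    intro H. injection H. nra.
Qed.
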